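(* Let $\mathcal{E}$ be an autonomous monoidal category and $\mathcal{K}$ an autonomous 2-category. Then the full sub-bicategory $\mathcal{Z}^{w\text{-}ps}_l(\mathcal{E},\mathcal{K})\subseteq\mathcal{Z}^w_l(\mathcal{E},\mathcal{K})$ whose objects are the pseudofunctors $Del(\mathcal{E})\to\mathcal{K}$ is autonomous.
   Context: A bicategory (2-category) is autonomous if every 1-cell has a left and a right adjoint; a monoidal category is autonomous if every object has a left and a right dual. A left adjoint of a 1-cell $f:A\to B$ is a 1-cell $u:B\to A$ with 2-cells $\eta:\mathrm{id}_A\Rightarrow u\circ f$, $\varepsilon:f\circ u\Rightarrow\mathrm{id}_B$ satisfying the triangle identities; right adjoints are defined dually. $Del(\mathcal{E})$ is the one-object bicategory with hom-category $\mathcal{E}$ and horizontal composition $\otimes$. $\mathcal{Z}^w_l(\mathcal{E},\mathcal{K})=\mathrm{Lax}_{clx}(Del(\mathcal{E}),\mathcal{K})$ is the bicategory whose objects are lax functors $Del(\mathcal{E})\to\mathcal{K}$, whose 1-cells $\mathcal{F}\to\mathcal{G}$ are colax natural transformations, i.e. pairs $(M,\sigma)$ with $M:\mathcal{F}( * )\to\mathcal{G}( * )$ and $\sigma_X:M\circ\mathcal{F}(X)\Rightarrow\mathcal{G}(X)\circ M$ natural in $X$ satisfying $(\mathcal{G}^2_{Y,X}\circ1_M)\cdot(1\circ\sigma_X)\cdot(\sigma_Y\circ1)=\sigma_{Y\otimes X}\cdot(1_M\circ\mathcal{F}^2_{Y,X})$ and $\sigma_I\cdot(1_M\circ\mathcal{F}^0)=\mathcal{G}^0\circ1_M$,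 and whose 2-cells are modifications (2-cells $f:M\Rightarrow N$ with $(1\circ f)\cdot\sigma_X=\tau_X\cdot(f\circ1)$); 1-cells compose by $(N,\tau)\circ(M,\sigma)=(N\circ M,(\tau\circ1_M)\cdot(1_N\circ\sigma))$. *)

(* Defs.v *)
Set Implicit Arguments.
Unset Strict Implicit.

Definition transport2 {A : Type} (P : A -> A -> Type) {x x' y y' : A}
  (e : x = x') (e' : y = y') (p : P x y) : P x' y' :=
  match e in _ = x0 return P x0 y' with
  | eq_refl => match e' in _ = y0 return P x y0 with eq_refl => p end
  end.

Record MonCat := {
  mob :> Type;
  mhom : mob -> mob -> Type;
  mid : forall a, mhom a a;
  mcomp : forall {a b c}, mhom b c -> mhom a b -> mhom a c;
  mcomp_idl : forall a b (f : mhom a b), mcomp (mid b) f = f;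
  mcomp_idr : forall a b (f : mhom a b), mcomp f (mid a) = f;
  mcomp_assoc : forall a b c d (f : mhom a b) (g : mhom b c) (h : mhom c d),
      mcomp h (mcomp g f) = mcomp (mcomp h g) f;
  mten : mob -> mob -> mob;
  mtenm : forall {a b c d}, mhom a b -> mhom c d -> mhom (mten a c) (mten b d);
  mtenm_id : forall a c, mtenm (mid a) (mid c) = mid (mten a c);
  mtenm_comp : forall a b c a' b' c' (f : mhom a b) (g : mhom b c)
      (f' : mhom a' b') (g' : mhom b' c'),
      mtenm (mcomp g f) (mcomp g' f') = mcomp (mtenm g g') (mtenm f f');
  munit : mob;
  massoc : forall a b c, mhom (mten (mten a b) c) (mten a (mten b c));
  massoc_inv : forall a b c, mhom (mten a (mten b c)) (mten (mten a b) c);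
  massoc_iso1 : forall a b c, mcomp (massoc_inv a b c) (massoc a b c) = mid _;
  massoc_iso2 : forall a b c, mcomp (massoc a b c) (massoc_inv a b c) = mid _;
  massoc_nat : forall a a' b b' c c' (f : mhom a a') (g : mhom b b') (h : mhom c c'),
      mcomp (massoc a' b' c') (mtenm (mtenm f g) h)
      = mcomp (mtenm f (mtenm g h)) (massoc a b c);
  mlunit : forall a, mhom (mten munit a) a;
  mlunit_inv : forall a, mhom a (mten munit a);
  mlunit_iso1 : forall a, mcomp (mlunit_inv a) (mlunit a) = mid _;
  mlunit_iso2 : forall a, mcomp (mlunit a) (mlunit_inv a) = mid _;
  mlunit_nat : forall a b (f : mhom a b),
      mcomp (mlunit b) (mtenm (mid munit) f) = mcomp f (mlunit a);
  mrunit : forall a, mhom (mten a munit) a;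
  mrunit_inv : forall a, mhom a (mten a munit);
  mrunit_iso1 : forall a, mcomp (mrunit_inv a) (mrunit a) = mid _;
  mrunit_iso2 : forall a, mcomp (mrunit a) (mrunit_inv a) = mid _;
  mrunit_nat : forall a b (f : mhom a b),
      mcomp (mrunit b) (mtenm f (mid munit)) = mcomp f (mrunit a);
  mpentagon : forall a b c d,
      mcomp (massoc a b (mten c d)) (massoc (mten a b) c d)
      = mcomp (mtenm (mid a) (massoc b c d))
          (mcomp (massoc a (mten b c) d) (mtenm (massoc a b c) (mid d)));
  mtriangle : forall a b,
      mcomp (mtenm (mid a) (mlunit b)) (massoc a munit b)
      = mtenm (mrunit a) (mid b)
}.
Arguments mhom {m}.
Arguments mid {m}.
Arguments mcomp {m a b c}.
Arguments mten {m}.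
Arguments mtenm {m a b c d}.
Arguments munit {m}.
Arguments massoc {m}.
Arguments massoc_inv {m}.
Arguments mlunit {m}.
Arguments mlunit_inv {m}.
Arguments mrunit {m}.
Arguments mrunit_inv {m}.

(* L is a left dual of R: ev : L (x) R -> I, coev : I -> R (x) L,
   with the two snake (triangle) identities. *)
Definition is_dual_pair {E : MonCat} (L R : E) : Prop :=
  exists (ev : mhom (mten L R) munit) (coev : mhom munit (mten R L)),
    mcomp (mlunit L) (mcomp (mtenm ev (mid L))
      (mcomp (massoc_inv L R L) (mcomp (mtenm (mid L) coev) (mrunit_inv L))))
      = mid L
    /\
    mcomp (mrunit R) (mcomp (mtenm (mid R) ev)
      (mcomp (massoc R L R) (mcomp (mtenm coev (mid R)) (mlunit_inv R))))
      = mid R.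

Definition mon_autonomous (E : MonCat) : Prop :=
  forall X : E, (exists Y : E, is_dual_pair Y X) /\ (exists Y : E, is_dual_pair X Y).

(* Strict 2-categories.  Laws for 2-cells whose boundaries only agree up
   to the strict 1-cell laws are stated with transport2.               *)
Record TwoCat := {
  tob :> Type;
  c1 : tob -> tob -> Type;
  id1 : forall a, c1 a a;
  comp1 : forall {a b c}, c1 b c -> c1 a b -> c1 a c;
  comp1_idl : forall a b (f : c1 a b), comp1 (id1 b) f = f;
  comp1_idr : forall a b (f : c1 a b), comp1 f (id1 a) = f;
  comp1_assoc : forall a b c d (f : c1 a b) (g : c1 b c) (h : c1 c d),
      comp1 h (comp1 g f) = comp1 (comp1 h g) f;
  c2 : forall {a b}, c1 a b -> c1 a b -> Type;
  id2 : forall a b (f : c1 a b), c2 f f;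
  vcomp : forall {a b} {f g h : c1 a b}, c2 g h -> c2 f g -> c2 f h;
  vcomp_idl : forall a b (f g : c1 a b) (x : c2 f g), vcomp (id2 g) x = x;
  vcomp_idr : forall a b (f g : c1 a b) (x : c2 f g), vcomp x (id2 f) = x;
  vcomp_assoc : forall a b (f g h k : c1 a b) (x : c2 f g) (y : c2 g h) (z : c2 h k),
      vcomp z (vcomp y x) = vcomp (vcomp z y) x;
  hcomp : forall {a b c} {f f' : c1 a b} {g g' : c1 b c},
      c2 g g' -> c2 f f' -> c2 (comp1 g f) (comp1 g' f');
  hcomp_id : forall a b c (f : c1 a b) (g : c1 b c),
      hcomp (id2 g) (id2 f) = id2 (comp1 g f);
  interchange : forall a b c (f f' f'' : c1 a b) (g g' g'' : c1 b c)
      (b1 : c2 g g') (b2 : c2 g' g'') (a1 : c2 f f') (a2 : c2 f' f''),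
      hcomp (vcomp b2 b1) (vcomp a2 a1) = vcomp (hcomp b2 a2) (hcomp b1 a1);
  hcomp_idl : forall a b (f f' : c1 a b) (x : c2 f f'),
      @transport2 _ (@c2 a b) _ _ _ _ (comp1_idl f) (comp1_idl f') (hcomp (id2 (id1 b)) x) = x;
  hcomp_idr : forall a b (f f' : c1 a b) (x : c2 f f'),
      @transport2 _ (@c2 a b) _ _ _ _ (comp1_idr f) (comp1_idr f') (hcomp x (id2 (id1 a))) = x;
  hcomp_assoc : forall a b c d (f f' : c1 a b) (g g' : c1 b c) (h h' : c1 c d)
      (x : c2 f f') (y : c2 g g') (z : c2 h h'),
      @transport2 _ (@c2 a d) _ _ _ _ (comp1_assoc f g h) (comp1_assoc f' g' h') (hcomp z (hcomp y x))
      = hcomp (hcomp z y) x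
}.
Arguments c1 {t}.
Arguments id1 {t}.
Arguments comp1 {t a b c}.
Arguments comp1_idl {t a b}.
Arguments comp1_idr {t a b}.
Arguments comp1_assoc {t a b c d}.
Arguments c2 {t a b}.
Arguments id2 {t a b}.
Arguments vcomp {t a b f g h}.
Arguments hcomp {t a b c f f' g g'}.

Definition cast2 {K : TwoCat} {a b : K} {f f' g g' : c1 a b}
  (e : f = f') (e' : g = g') (x : c2 f g) : c2 f' g' := @transport2 _ (@c2 K a b) _ _ _ _ e e' x.

Definition is_iso2 {K : TwoCat} {a b : K} {f g : c1 a b} (x : c2 f g) : Prop :=
  exists y : c2 g f, vcomp y x = id2 f /\ vcomp x y = id2 g.

(* Triangle identities for eta : id_a => u o f, eps : f o u => id_b
   (the associator and unitors of the strict 2-category K are identities). *)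
Definition triangles {K : TwoCat} {a b : K} (f : c1 a b) (u : c1 b a)
  (eta : c2 (id1 a) (comp1 u f)) (eps : c2 (comp1 f u) (id1 b)) : Prop :=
  cast2 (comp1_idr f) (comp1_idl f)
    (vcomp (hcomp eps (id2 f)) (cast2 eq_refl (comp1_assoc f u f) (hcomp (id2 f) eta)))
    = id2 f
  /\
  cast2 (comp1_idl u) (comp1_idr u)
    (vcomp (hcomp (id2 u) eps) (cast2 eq_refl (eq_sym (comp1_assoc u f u)) (hcomp eta (id2 u))))
    = id2 u.

(* u is a left adjoint of f (paper's convention: eta : id => u o f,
   eps : f o u => id).  u is a right adjoint of f iff f is a left adjoint of u. *)
Definition is_left_adjoint {K : TwoCat} {a b : K} (f : c1 a b) (u : c1 b a) : Prop :=
  exists eta eps, @triangles K a b f u eta eps.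

Definition twocat_autonomous (K : TwoCat) : Prop :=
  forall (a b : K) (f : c1 a b),
    (exists u : c1 b a, is_left_adjoint f u) /\ (exists u : c1 b a, is_left_adjoint u f).

(* Lax functors Del(E) -> K.  In Del(E), Y o X = Y (x) X, the associator
   and unitors are those of E.                                         *)
Record LaxFunctor (E : MonCat) (K : TwoCat) := {
  fob : K;
  f1 : E -> c1 fob fob;
  f2 : forall X Y : E, mhom X Y -> c2 (f1 X) (f1 Y);
  f2_id : forall X, f2 (mid X) = id2 (f1 X);
  f2_comp : forall X Y Z (f : mhom X Y) (g : mhom Y Z),
      f2 (mcomp g f) = vcomp (f2 g) (f2 f);
  fmu : forall Y X : E, c2 (comp1 (f1 Y) (f1 X)) (f1 (mten Y X));
  fmu_nat : forall X X' Y Y' (f : mhom X X') (g : mhom Y Y'),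
      vcomp (fmu Y' X') (hcomp (f2 g) (f2 f)) = vcomp (f2 (mtenm g f)) (fmu Y X);
  feta : c2 (id1 fob) (f1 munit);
  fassoc : forall X Y Z : E,
      vcomp (f2 (massoc Z Y X))
        (vcomp (fmu (mten Z Y) X) (hcomp (fmu Z Y) (id2 (f1 X))))
      = cast2 (comp1_assoc (f1 X) (f1 Y) (f1 Z)) eq_refl
          (vcomp (fmu Z (mten Y X)) (hcomp (id2 (f1 Z)) (fmu Y X)));
  flunit : forall X : E,
      cast2 (comp1_idl (f1 X)) eq_refl
        (vcomp (f2 (mlunit X)) (vcomp (fmu munit X) (hcomp feta (id2 (f1 X)))))
      = id2 (f1 X);
  frunit : forall X : E,
      cast2 (comp1_idr (f1 X)) eq_refl
        (vcomp (f2 (mrunit X)) (vcomp (fmu X munit) (hcomp (id2 (f1 X)) feta)))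
      = id2 (f1 X)
}.
Arguments fob {E K}.
Arguments f1 {E K}.
Arguments f2 {E K} l {X Y}.
Arguments fmu {E K}.
Arguments feta {E K}.

Definition is_pseudo {E K} (F : LaxFunctor E K) : Prop :=
  (forall Y X : E, is_iso2 (fmu F Y X)) /\ is_iso2 (feta F).

Record ColaxTrans {E K} (F G : LaxFunctor E K) := {
  tM : c1 (fob F) (fob G);
  tsig : forall X : E, c2 (comp1 tM (f1 F X)) (comp1 (f1 G X) tM);
  tsig_nat : forall X X' (f : mhom X X'),
      vcomp (hcomp (f2 G f) (id2 tM)) (tsig X) = vcomp (tsig X') (hcomp (id2 tM) (f2 F f));
  tsig_mu : forall Y X : E,
      vcomp (hcomp (fmu G Y X) (id2 tM))
        (cast2 eq_refl (comp1_assoc tM (f1 G X) (f1 G Y))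
          (vcomp (hcomp (id2 (f1 G Y)) (tsig X))
            (cast2 eq_refl (eq_sym (comp1_assoc (f1 F X) tM (f1 G Y)))
              (hcomp (tsig Y) (id2 (f1 F X))))))
      = cast2 (comp1_assoc (f1 F X) (f1 F Y) tM) eq_refl
          (vcomp (tsig (mten Y X)) (hcomp (id2 tM) (fmu F Y X)));
  tsig_eta :
      cast2 (comp1_idr tM) eq_refl (vcomp (tsig munit) (hcomp (id2 tM) (feta F)))
      = cast2 (comp1_idl tM) eq_refl (hcomp (feta G) (id2 tM))
}.
Arguments tM {E K F G}.
Arguments tsig {E K F G}.

Definition id_sig {E K} (F : LaxFunctor E K) :
  forall X : E, c2 (comp1 (id1 (fob F)) (f1 F X)) (comp1 (f1 F X) (id1 (fob F))) :=
  fun X => cast2 (eq_sym (comp1_idl (f1 F X))) (eq_sym (comp1_idr (f1 F X))) (id2 (f1 F X)).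

Definition comp_sig {E K} {F G H : LaxFunctor E K}
  (M : c1 (fob F) (fob G)) (N : c1 (fob G) (fob H))
  (sM : forall X : E, c2 (comp1 M (f1 F X)) (comp1 (f1 G X) M))
  (sN : forall X : E, c2 (comp1 N (f1 G X)) (comp1 (f1 H X) N)) :
  forall X : E, c2 (comp1 (comp1 N M) (f1 F X)) (comp1 (f1 H X) (comp1 N M)) :=
  fun X => cast2 (comp1_assoc (f1 F X) M N) (eq_sym (comp1_assoc M N (f1 H X)))
    (vcomp (hcomp (sN X) (id2 M))
      (cast2 eq_refl (comp1_assoc M (f1 G X) N) (hcomp (id2 N) (sM X)))).

Definition is_modif {E K} {F G : LaxFunctor E K} {M N : c1 (fob F) (fob G)}
  (sM : forall X : E, c2 (comp1 M (f1 F X)) (comp1 (f1 G X) M))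
  (sN : forall X : E, c2 (comp1 N (f1 F X)) (comp1 (f1 G X) N))
  (a : c2 M N) : Prop :=
  forall X : E, vcomp (hcomp (id2 (f1 G X)) a) (sM X) = vcomp (sN X) (hcomp a (id2 (f1 F X))).

(* Vertical/horizontal composition of modifications and
   the associator/unitors of Z^w_l(E,K) are computed on the underlying
   2-cells of K, so the triangle identities in Z^w_l(E,K) are exactly the
   triangle identities of the underlying 2-cells in K. *)
Definition is_left_adjoint_Z {E K} {F G : LaxFunctor E K}
  (T : ColaxTrans F G) (U : ColaxTrans G F) : Prop :=
  exists (eta : c2 (id1 (fob F)) (comp1 (tM U) (tM T)))
         (eps : c2 (comp1 (tM T) (tM U)) (id1 (fob G))),
    is_modif (id_sig F) (comp_sig (tsig T) (tsig U)) eta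
    /\ is_modif (comp_sig (tsig U) (tsig T)) (id_sig G) eps
    /\ triangles eta eps.

(* Main.v *)
Require Import Defs.
From Stdlib Require Import Eqdep ClassicalEpsilon.
Set Implicit Arguments.
Unset Strict Implicit.

Section CellSec.
Context (K : TwoCat).

Definition Pk (a b : K) := {f : c1 a b & {g : c1 a b & c2 f g}}.
Definition Cell (a b : K) := option (Pk a b).

Definition at_ {a b : K} {f g : c1 a b} (x : c2 f g) : Cell a b :=
  Some (existT _ f (existT _ g x)).
Definition i_ {a b : K} (f : c1 a b) : Cell a b := at_ (id2 f).

Definition h_ {a b c : K} (q : Cell b c) (p : Cell a b) : Cell a c :=
  match q, p with
  | Some (existT _ g (existT _ g' y)), Some (existT _ f (existT _ f' x)) => at_ (hcomp y x)
  | _, _ => None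
  end.

Definition v_ {a b : K} (q p : Cell a b) : Cell a b :=
  match p, q with
  | Some (existT _ f (existT _ g x)), Some (existT _ g' (existT _ k y)) =>
      match excluded_middle_informative (g = g') with
      | left e => at_ (vcomp y (cast2 eq_refl e x))
      | right _ => None
      end
  | _, _ => None
  end.

Definition ty {a b : K} (C : Cell a b) (f g : c1 a b) : Prop := exists x : c2 f g, C = at_ x.

Lemma at_inj {a b : K} {f g : c1 a b} (x y : c2 f g) : at_ x = at_ y -> x = y.
Proof.
  unfold at_; intro H. injection H; intro H'.
  apply inj_pair2 in H'. apply inj_pair2 in H'. exact H'.
Qed.

Lemma at_cast {a b : K} {f f' g g' : c1 a b} (e : f = f') (e' : g = g') (x : c2 f g) :
  at_ (cast2 e e' x) = at_ x.
Proof. destruct e, e'. reflexivity. Qed.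

Lemma at_transport {a b : K} {f f' g g' : c1 a b} (e : f = f') (e' : g = g') (x : c2 f g) :
  at_ (@transport2 _ (@c2 K a b) _ _ _ _ e e' x) = at_ x.
Proof. destruct e, e'. reflexivity. Qed.

Lemma at_vcomp {a b : K} {f g h : c1 a b} (y : c2 g h) (x : c2 f g) :
  at_ (vcomp y x) = v_ (at_ y) (at_ x).
Proof.
  unfold v_, at_ at 2 3. destruct (excluded_middle_informative (g = g)) as [e|n].
  - rewrite (UIP_refl _ _ e). reflexivity.
  - exfalso; apply n; reflexivity.
Qed.

Lemma at_hcomp {a b c : K} {f f' : c1 a b} {g g' : c1 b c} (y : c2 g g') (x : c2 f f') :
  at_ (hcomp y x) = h_ (at_ y) (at_ x).
Proof. reflexivity. Qed.

Lemma at_id2 {a b : K} (f : c1 a b) : at_ (id2 f) = i_ f.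
Proof. reflexivity. Qed.

Lemma v_at_eq {a b : K} {f g g' k : c1 a b} (y : c2 g' k) (x : c2 f g) (e : g = g') :
  v_ (at_ y) (at_ x) = at_ (vcomp y (cast2 eq_refl e x)).
Proof.
  subst. rewrite <- at_vcomp. reflexivity.
Qed.
Lemma v_at_neq {a b : K} {f g g' k : c1 a b} (y : c2 g' k) (x : c2 f g) :
  g <> g' -> v_ (at_ y) (at_ x) = None.
Proof.
  intro n. unfold v_, at_. destruct (excluded_middle_informative (g = g')); [contradiction|reflexivity].
Qed.

Lemma v_assoc {a b : K} (r q p : Cell a b) : v_ r (v_ q p) = v_ (v_ r q) p.
Proof.
  destruct p as [[f [g x]]|]; [|destruct q as [[? [? ?]]|]; destruct r as [[? [? ?]]|]; reflexivity].
  destruct q as [[g' [k y]]|]; [|destruct r as [[? [? ?]]|]; reflexivity].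
  destruct r as [[k' [l z]]|].
  2:{ change (Some (existT _ g' (existT _ k y))) with (at_ y).
      change (Some (existT _ f (existT _ g x))) with (at_ x).
      destruct (excluded_middle_informative (g = g')) as [e|n].
      - rewrite (v_at_eq _ _ e). reflexivity.
      - rewrite (v_at_neq _ _ n). reflexivity. }
  change (Some (existT _ g' (existT _ k y))) with (at_ y).
  change (Some (existT _ f (existT _ g x))) with (at_ x).
  change (Some (existT _ k' (existT _ l z))) with (at_ z).
  destruct (excluded_middle_informative (g = g')) as [e1|n1];
  destruct (excluded_middle_informative (k = k')) as [e2|n2].
  - subst. rewrite <- !at_vcomp. f_equal. apply vcomp_assoc.
  - subst. rewrite <- at_vcomp. rewrite (v_at_neq _ _ n2). rewrite (v_at_neq _ _ n2). reflexivity.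
  - subst. rewrite <- at_vcomp. rewrite (v_at_neq _ _ n1). rewrite (v_at_neq _ _ n1). reflexivity.
  - rewrite (v_at_neq _ _ n1). rewrite (v_at_neq _ _ n2). reflexivity.
Qed.

Lemma h_assoc {a b c d : K} (r : Cell c d) (q : Cell b c) (p : Cell a b) :
  h_ r (h_ q p) = h_ (h_ r q) p.
Proof.
  destruct p as [[f [f' x]]|]; destruct q as [[g [g' y]]|]; destruct r as [[k [k' z]]|];
  try reflexivity.
  change (at_ (hcomp z (hcomp y x)) = at_ (hcomp (hcomp z y) x)).
  rewrite <- (at_transport (comp1_assoc f g k) (comp1_assoc f' g' k') (hcomp z (hcomp y x))), hcomp_assoc. reflexivity.
Qed.

Lemma h_idl {a b : K} (p : Cell a b) : h_ (i_ (id1 b)) p = p.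
Proof.
  destruct p as [[f [f' x]]|]; try reflexivity.
  change (at_ (hcomp (id2 (id1 b)) x) = at_ x).
  rewrite <- (at_transport (comp1_idl f) (comp1_idl f') (hcomp (id2 (id1 b)) x)), hcomp_idl. reflexivity.
Qed.

Lemma h_idr {a b : K} (p : Cell a b) : h_ p (i_ (id1 a)) = p.
Proof.
  destruct p as [[f [f' x]]|]; try reflexivity.
  change (at_ (hcomp x (id2 (id1 a))) = at_ x).
  rewrite <- (at_transport (comp1_idr f) (comp1_idr f') (hcomp x (id2 (id1 a)))), hcomp_idr. reflexivity.
Qed.

Lemma h_i {a b c : K} (g : c1 b c) (f : c1 a b) : h_ (i_ g) (i_ f) = i_ (comp1 g f).
Proof. unfold i_; rewrite <- at_hcomp, hcomp_id. reflexivity. Qed.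

Lemma ty_at {a b : K} {f g : c1 a b} (x : c2 f g) : ty (at_ x) f g.
Proof. exists x; reflexivity. Qed.
Lemma ty_i {a b : K} (f : c1 a b) : ty (i_ f) f f.
Proof. apply ty_at. Qed.
Lemma ty_h {a b c : K} (q : Cell b c) (p : Cell a b) g g' f f' :
  ty q g g' -> ty p f f' -> ty (h_ q p) (comp1 g f) (comp1 g' f').
Proof. intros [y ->] [x ->]. apply ty_at. Qed.
Lemma ty_v {a b : K} (q p : Cell a b) f g g' k :
  ty q g' k -> ty p f g -> g = g' -> ty (v_ q p) f k.
Proof. intros [y ->] [x ->] e. subst. rewrite <- at_vcomp. apply ty_at. Qed.
Lemma ty_conv {a b : K} (C : Cell a b) f g f' g' :
  ty C f g -> f = f' -> g = g' -> ty C f' g'.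
Proof. intros H e e'; subst; exact H. Qed.

Lemma v_idl {a b : K} (p : Cell a b) f g : ty p f g -> v_ (i_ g) p = p.
Proof. intros [x ->]. unfold i_; rewrite <- at_vcomp, vcomp_idl. reflexivity. Qed.
Lemma v_idr {a b : K} (p : Cell a b) f g : ty p f g -> v_ p (i_ f) = p.
Proof. intros [x ->]. unfold i_; rewrite <- at_vcomp, vcomp_idr. reflexivity. Qed.

Lemma ichg {a b c : K} (y1 y2 : Cell b c) (x1 x2 : Cell a b) g g' g'' f f' f'' :
  ty y1 g g' -> ty y2 g' g'' -> ty x1 f f' -> ty x2 f' f'' ->
  h_ (v_ y2 y1) (v_ x2 x1) = v_ (h_ y2 x2) (h_ y1 x1).
Proof.
  intros [b1 ->] [b2 ->] [a1 ->] [a2 ->].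
  rewrite <- !at_vcomp, <- !at_hcomp, <- at_vcomp. rewrite interchange. reflexivity.
Qed.

Definition lay {a b c d : K} (L : c1 c d) (x : Cell b c) (R : c1 a b) : Cell a d :=
  h_ (i_ L) (h_ x (i_ R)).

Lemma ty_lay {a b c d : K} (L : c1 c d) (x : Cell b c) (R : c1 a b) s t :
  ty x s t -> ty (lay L x R) (comp1 L (comp1 s R)) (comp1 L (comp1 t R)).
Proof. intro H. unfold lay. apply ty_h; [apply ty_i|]. apply ty_h; [exact H|apply ty_i]. Qed.

Lemma lay_lay {a b c d e f : K} (L : c1 e f) (L' : c1 d e) (x : Cell c d) (R' : c1 b c) (R : c1 a b) :
  lay L (lay L' x R') R = lay (comp1 L L') x (comp1 R' R).
Proof.
  unfold lay. rewrite <- !h_i. rewrite !h_assoc. reflexivity.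
Qed.

Lemma lay_v {a b c d : K} (L : c1 c d) (x y : Cell b c) (R : c1 a b) f g k :
  ty x f g -> ty y g k -> v_ (lay L y R) (lay L x R) = lay L (v_ y x) R.
Proof.
  intros Hx Hy. unfold lay.
  rewrite <- (ichg (g:=L) (g':=L) (g'':=L) (f:=comp1 f R) (f':= comp1 g R) (f'':=comp1 k R));
    try apply ty_i; try (apply ty_h; [assumption|apply ty_i]).
  rewrite (v_idl (f:=L)) by apply ty_i. f_equal.
  rewrite <- (ichg (g:=f) (g':=g) (g'':=k) (f:=R) (f':=R) (f'':=R)); try apply ty_i; try assumption.
  rewrite (v_idl (f:=R)) by apply ty_i. reflexivity.
Qed.

Lemma lay_id {a b : K} (x : Cell a b) : lay (id1 b) x (id1 a) = x.
Proof. unfold lay. rewrite h_idl, h_idr. reflexivity. Qed.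

Lemma lay_i {a b c d : K} (L : c1 c d) (f : c1 b c) (R : c1 a b) :
  lay L (i_ f) R = i_ (comp1 L (comp1 f R)).
Proof. unfold lay. rewrite !h_i. reflexivity. Qed.

End CellSec.

Ltac cnorm := repeat (first [rewrite <- comp1_assoc | rewrite comp1_idl | rewrite comp1_idr]).
Ltac eqn := first [reflexivity | (cnorm; reflexivity)].
Ltac tyc0 := lazymatch goal with
 | |- ty (at_ _) _ _ => apply ty_at
 | |- ty (i_ _) _ _ => apply ty_i
 | |- ty (h_ _ _) _ _ => eapply ty_h; [tyc0 | tyc0]
 | |- ty (v_ _ _) _ _ => eapply ty_v; [tyc0 | tyc0 | eqn]
 | |- ty (lay _ _ _) _ _ => eapply ty_lay; tyc0
 | |- ty _ _ _ => eassumption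
 end.
Ltac tyc := lazymatch goal with
 | |- ty _ _ _ => eapply ty_conv; [tyc0 | eqn | eqn]
 end.
Ltac side := first [tyc | eqn].
Ltac vid := repeat (first [erewrite v_idl by side | erewrite v_idr by side]).

Section Slides.
Context (K : TwoCat).

Lemma slide_xy {z a b c d e : K} (L0 : c1 d e) (L1 : c1 b e) (R0 : c1 z c) (R1 : c1 z a)
  (Mm : c1 b c) (x : Cell c d) (y : Cell a b) s t s' t' :
  ty x s t -> ty y s' t' -> R0 = comp1 Mm (comp1 s' R1) -> L1 = comp1 L0 (comp1 t Mm) ->
  v_ (lay L1 y R1) (lay L0 x R0)
  = v_ (lay L0 x (comp1 Mm (comp1 t' R1))) (lay (comp1 L0 (comp1 s Mm)) y R1).
Proof.
  intros Hx Hy -> ->. unfold lay. rewrite <- !h_i, <- !h_assoc.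
  do 4 (erewrite <- (ichg (K:=K)) by side).
  vid. rewrite <- ?h_assoc. do 4 (erewrite <- (ichg (K:=K)) by side). vid.
  reflexivity.
Qed.




Lemma slide_yx {z a b c d e : K} (L0 : c1 d e) (L1 : c1 b e) (R0 : c1 z c) (R1 : c1 z a)
  (Mm : c1 b c) (x : Cell c d) (y : Cell a b) s t s' t' :
  ty x s t -> ty y s' t' -> R0 = comp1 Mm (comp1 t' R1) -> L1 = comp1 L0 (comp1 s Mm) ->
  v_ (lay L0 x R0) (lay L1 y R1)
  = v_ (lay (comp1 L0 (comp1 t Mm)) y R1) (lay L0 x (comp1 Mm (comp1 s' R1))).
Proof.
  intros Hx Hy -> ->. symmetry. apply (slide_xy (s:=s) (t:=t) (s':=s') (t':=t')); auto.
Qed.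

Lemma ch2 {a b : K} (A B D : Cell a b) : v_ A B = D -> forall r, v_ A (v_ B r) = v_ D r.
Proof. intros H r. rewrite v_assoc, H. reflexivity. Qed.
Lemma ch3 {a b : K} (A B C D : Cell a b) : v_ A (v_ B C) = D -> forall r, v_ A (v_ B (v_ C r)) = v_ D r.
Proof. intros H r. rewrite (v_assoc B C r), (v_assoc A (v_ B C) r), H. reflexivity. Qed.
Lemma ch4 {a b : K} (A B C E D : Cell a b) : v_ A (v_ B (v_ C E)) = D ->
  forall r, v_ A (v_ B (v_ C (v_ E r))) = v_ D r.
Proof. intros H r. rewrite (v_assoc C E r). apply (ch3 H). Qed.
Lemma ch5 {a b : K} (A B C E F D : Cell a b) : v_ A (v_ B (v_ C (v_ E F))) = D ->
  forall r, v_ A (v_ B (v_ C (v_ E (v_ F r)))) = v_ D r.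
Proof. intros H r. rewrite (v_assoc E F r). apply (ch4 H). Qed.
Lemma ch6 {a b : K} (A B C E F G D : Cell a b) : v_ A (v_ B (v_ C (v_ E (v_ F G)))) = D ->
  forall r, v_ A (v_ B (v_ C (v_ E (v_ F (v_ G r))))) = v_ D r.
Proof. intros H r. rewrite (v_assoc F G r). apply (ch5 H). Qed.

Lemma slide_xy_r {z a b c d e : K} (L0 : c1 d e) (L1 : c1 b e) (R0 : c1 z c) (R1 : c1 z a)
  (Mm : c1 b c) (x : Cell c d) (y : Cell a b) s t s' t' (r : Cell z e) :
  ty x s t -> ty y s' t' -> R0 = comp1 Mm (comp1 s' R1) -> L1 = comp1 L0 (comp1 t Mm) ->
  v_ (lay L1 y R1) (v_ (lay L0 x R0) r)
  = v_ (lay L0 x (comp1 Mm (comp1 t' R1))) (v_ (lay (comp1 L0 (comp1 s Mm)) y R1) r).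
Proof. intros. rewrite v_assoc. erewrite slide_xy; eauto. rewrite v_assoc. reflexivity. Qed.
Lemma slide_yx_r {z a b c d e : K} (L0 : c1 d e) (L1 : c1 b e) (R0 : c1 z c) (R1 : c1 z a)
  (Mm : c1 b c) (x : Cell c d) (y : Cell a b) s t s' t' (r : Cell z e) :
  ty x s t -> ty y s' t' -> R0 = comp1 Mm (comp1 t' R1) -> L1 = comp1 L0 (comp1 s Mm) ->
  v_ (lay L0 x R0) (v_ (lay L1 y R1) r)
  = v_ (lay (comp1 L0 (comp1 t Mm)) y R1) (v_ (lay L0 x (comp1 Mm (comp1 s' R1))) r).
Proof. intros. rewrite v_assoc. erewrite slide_yx; eauto. rewrite v_assoc. reflexivity. Qed.

Lemma lay_vd {a b c d : K} (L : c1 c d) (x y : Cell b c) (R : c1 a b) f g k :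
  ty x f g -> ty y g k -> lay L (v_ y x) R = v_ (lay L y R) (lay L x R).
Proof. intros; symmetry; eapply lay_v; eauto. Qed.

End Slides.

Ltac cnorm_in H := repeat (first [rewrite <- comp1_assoc in H | rewrite comp1_idl in H | rewrite comp1_idr in H]).
Ltac rn := rewrite <- ?v_assoc.
Ltac rwc H := first [rewrite H | rewrite (ch2 H) | rewrite (ch3 H) | rewrite (ch4 H) | rewrite (ch5 H) | rewrite (ch6 H)]; rn.
Ltac rwcl H := let H' := fresh in pose proof (eq_sym H) as H'; rwc H'; clear H'.
Ltac inctx E L R H := pose proof (f_equal (fun Z => lay L Z R) E) as H; cbn beta in H;
  repeat (erewrite lay_vd in H by side); rewrite ?lay_lay, ?lay_i in H; cnorm_in H.
Ltac sl x y Mm := first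
  [ erewrite (slide_xy_r (x:=x) (y:=y) (Mm:=Mm)) by side
  | erewrite (slide_xy (x:=x) (y:=y) (Mm:=Mm)) by side
  | erewrite (slide_yx_r (x:=x) (y:=y) (Mm:=Mm)) by side
  | erewrite (slide_yx (x:=x) (y:=y) (Mm:=Mm)) by side ]; rn; cnorm.


Section Moves.
Context (K : TwoCat).
Lemma f_post {a b : K} (A B X : Cell a b) : A = B -> v_ A X = v_ B X.
Proof. intros ->; reflexivity. Qed.
Lemma f_pre {a b : K} (A B X : Cell a b) : A = B -> v_ X A = v_ X B.
Proof. intros ->; reflexivity. Qed.
End Moves.

Ltac rwc_in H E := first [rewrite E in H | rewrite (ch2 E) in H | rewrite (ch3 E) in H | rewrite (ch4 E) in H | rewrite (ch5 E) in H | rewrite (ch6 E) in H]; rewrite <- ?v_assoc in H.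
Ltac postc H X := apply (f_post X) in H; rewrite <- ?v_assoc in H.
Ltac prec H X := apply (f_pre X) in H; rewrite <- ?v_assoc in H.
Ltac vid_in H := repeat (first [erewrite v_idl in H by side | erewrite v_idr in H by side]).

Notation "⟪ x ⟫" := (lay (id1 _) (at_ x) (id1 _)).
Ltac tocell H := apply (f_equal (fun z => at_ z)) in H; cbn beta in H;
  repeat (first [rewrite at_vcomp in H | rewrite at_cast in H | rewrite at_transport in H | rewrite at_hcomp in H | rewrite at_id2 in H]).
Ltac unlay := unfold lay; rewrite ?h_idl, ?h_idr.
Ltac expand := rewrite ?at_vcomp; repeat (erewrite lay_vd by side); rn.

Section Inv2.
Context (K : TwoCat).
Definition inv2 {a b : K} {f g : c1 a b} {x : c2 f g} (H : is_iso2 x) : c2 g f :=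
  proj1_sig (constructive_indefinite_description _ H).
Lemma inv2_l {a b : K} {f g : c1 a b} {x : c2 f g} (H : is_iso2 x) : vcomp (inv2 H) x = id2 f.
Proof. unfold inv2. destruct (constructive_indefinite_description _ H) as [y [H1 H2]]. exact H1. Qed.
Lemma inv2_r {a b : K} {f g : c1 a b} {x : c2 f g} (H : is_iso2 x) : vcomp x (inv2 H) = id2 g.
Proof. unfold inv2. destruct (constructive_indefinite_description _ H) as [y [H1 H2]]. exact H2. Qed.
Lemma inv2_lc {a b : K} {f g : c1 a b} {x : c2 f g} (H : is_iso2 x) : v_ ⟪inv2 H⟫ ⟪x⟫ = i_ f.
Proof. rewrite !lay_id, <- at_vcomp, inv2_l. reflexivity. Qed.
Lemma inv2_rc {a b : K} {f g : c1 a b} {x : c2 f g} (H : is_iso2 x) : v_ ⟪x⟫ ⟪inv2 H⟫ = i_ g.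
Proof. rewrite !lay_id, <- at_vcomp, inv2_r. reflexivity. Qed.
End Inv2.

Section TyGet.
Context (K : TwoCat).
Definition tyget {a b : K} {C : Cell a b} {f g : c1 a b} (H : ty C f g) : c2 f g :=
  proj1_sig (constructive_indefinite_description _ H).
Lemma tyget_at {a b : K} {C : Cell a b} {f g : c1 a b} (H : ty C f g) : at_ (tyget H) = C.
Proof. unfold tyget. destruct (constructive_indefinite_description _ H) as [x Hx]. cbn. auto. Qed.

Lemma tri_c {a b : K} (f : c1 a b) (u : c1 b a) eta eps :
  @triangles K a b f u eta eps ->
  v_ (lay (id1 b) (at_ eps) f) (lay f (at_ eta) (id1 a)) = i_ f /\
  v_ (lay u (at_ eps) (id1 b)) (lay (id1 a) (at_ eta) u) = i_ u.
Proof.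
  intros [H1 H2]. unfold cast2 in *. split.
  - tocell H1. unlay. exact H1.
  - tocell H2. unlay. exact H2.
Qed.
End TyGet.

Ltac flat := repeat (erewrite lay_vd by side); rewrite ?lay_lay; cnorm; rn.
Ltac onR tac := match goal with |- ?L = _ => let l := fresh "lhs" in set (l := L); tac; subst l end.
Ltac onL tac := match goal with |- _ = ?R => let r := fresh "rhs" in set (r := R); tac; subst r end.
Ltac tocellG := apply at_inj;
  repeat (first [rewrite at_vcomp | rewrite at_cast | rewrite at_transport | rewrite at_hcomp | rewrite at_id2]).
Ltac unlay_in H := unfold lay in H; rewrite ?h_idl, ?h_idr in H.

Section Inv.
Context (K : TwoCat).

Lemma iso_from_cells {a b : K} {f g : c1 a b} (x : c2 f g) (T : Cell a b) :
  ty T g f -> v_ T (at_ x) = i_ f -> v_ (at_ x) T = i_ g -> is_iso2 x.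
Proof.
  intros [y ->] H1 H2. exists y. split; apply at_inj; rewrite at_vcomp; assumption.
Qed.

Lemma colax_inv {a b : K} (M : c1 a b) (AX AZ : c1 a a) (BX BZ : c1 b b)
 (sX : c2 (comp1 M AX) (comp1 BX M)) (sZ : c2 (comp1 M AZ) (comp1 BZ M))
 (nA : c2 (id1 a) (comp1 AZ AX)) (eA : c2 (comp1 AX AZ) (id1 a))
 (nB : c2 (id1 b) (comp1 BZ BX)) (eB : c2 (comp1 BX BZ) (id1 b))
 (triA : v_ (lay (id1 a) (at_ eA) AX) (lay AX (at_ nA) (id1 a)) = i_ AX)
 (triB : v_ (lay (id1 b) (at_ eB) BX) (lay BX (at_ nB) (id1 b)) = i_ BX)
 (H1 : v_ (lay (id1 b) (at_ eB) M) (v_ (lay BX (at_ sZ) (id1 a)) (lay (id1 b) (at_ sX) AZ))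
       = lay M (at_ eA) (id1 a))
 (H2 : v_ (lay BZ (at_ sX) (id1 a)) (v_ (lay (id1 b) (at_ sZ) AX) (lay M (at_ nA) (id1 a)))
       = lay (id1 b) (at_ nB) M) :
 is_iso2 sX.
Proof.
  apply (iso_from_cells (T := v_ (lay (id1 b) (at_ eB) (comp1 M AX))
     (v_ (lay BX (at_ sZ) AX) (lay (comp1 BX M) (at_ nA) (id1 a))))).
  - Set Ltac Backtrace. tyc.
  - replace (at_ sX) with (lay (id1 _) (at_ sX) (id1 _)) by apply lay_id.
    rn.
    sl (at_ sX) (at_ nA) (id1 a).
    inctx H1 (id1 b) AX H1'. rwc H1'.
    inctx triA M (id1 a) T'. rwc T'. reflexivity.
  - replace (at_ sX) with (lay (id1 _) (at_ sX) (id1 _)) by apply lay_id.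
    rn. sl (at_ eB) (at_ sX) (id1 b).
    inctx H2 BX (id1 a) H2'. rwc H2'.
    inctx triB (id1 b) M T'. rwc T'. reflexivity.
Qed.

Lemma lax_inv {a b : K} (N : c1 b a) (AX AY : c1 a a) (BX BY : c1 b b)
 (tX : c2 (comp1 AX N) (comp1 N BX)) (tY : c2 (comp1 AY N) (comp1 N BY))
 (nA : c2 (id1 a) (comp1 AX AY)) (eA : c2 (comp1 AY AX) (id1 a))
 (nB : c2 (id1 b) (comp1 BX BY)) (eB : c2 (comp1 BY BX) (id1 b))
 (triA : v_ (lay AX (at_ eA) (id1 a)) (lay (id1 a) (at_ nA) AX) = i_ AX)
 (triB : v_ (lay BX (at_ eB) (id1 b)) (lay (id1 b) (at_ nB) BX) = i_ BX)
 (H1 : v_ (lay N (at_ eB) (id1 b)) (v_ (lay (id1 a) (at_ tY) BX) (lay AY (at_ tX) (id1 b)))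
       = lay (id1 a) (at_ eA) N)
 (H2 : v_ (lay (id1 a) (at_ tX) BY) (v_ (lay AX (at_ tY) (id1 b)) (lay (id1 a) (at_ nA) N))
       = lay N (at_ nB) (id1 b)) :
 is_iso2 tX.
Proof.
  apply (iso_from_cells (T := v_ (lay (comp1 AX N) (at_ eB) (id1 b))
     (v_ (lay AX (at_ tY) BX) (lay (id1 a) (at_ nA) (comp1 N BX))))).
  - tyc.
  - replace (at_ tX) with (lay (id1 _) (at_ tX) (id1 _)) by apply lay_id.
    rn. sl (at_ nA) (at_ tX) (id1 a).
    inctx H1 AX (id1 b) H1'. rwc H1'.
    inctx triA (id1 a) N T'. rwc T'. reflexivity.
  - replace (at_ tX) with (lay (id1 _) (at_ tX) (id1 _)) by apply lay_id.
    rn. sl (at_ tX) (at_ eB) (id1 b).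
    inctx H2 (id1 a) BX H2'. rwc H2'.
    inctx triB N (id1 b) T'. rwc T'. reflexivity.
Qed.
End Inv.

Section LaxCells.
Context {E : MonCat} {K : TwoCat} (F : LaxFunctor E K).
Local Notation A := (f1 F).
Local Notation Fo := (fob F).

Lemma f2_comp_c {X Y Z : E} (f : mhom X Y) (g : mhom Y Z) :
  v_ ⟪f2 F g⟫ ⟪f2 F f⟫ = ⟪f2 F (mcomp g f)⟫.
Proof. rewrite !lay_id, <- at_vcomp, f2_comp. reflexivity. Qed.
Lemma f2_id_c (X : E) : ⟪f2 F (mid X)⟫ = i_ (A X).
Proof. rewrite lay_id, f2_id. reflexivity. Qed.

Lemma fassoc_c (X Y Z : E) :
  v_ ⟪f2 F (massoc Z Y X)⟫ (v_ ⟪fmu F (mten Z Y) X⟫ (lay (id1 _) (at_ (fmu F Z Y)) (A X)))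
  = v_ ⟪fmu F Z (mten Y X)⟫ (lay (A Z) (at_ (fmu F Y X)) (id1 _)).
Proof. pose proof (fassoc F X Y Z) as H. tocell H. unlay. exact H. Qed.

Lemma flunit_c (X : E) :
  v_ ⟪f2 F (mlunit X)⟫ (v_ ⟪fmu F munit X⟫ (lay (id1 _) (at_ (feta F)) (A X))) = i_ (A X).
Proof. pose proof (flunit F X) as H. tocell H. unlay. exact H. Qed.

Lemma frunit_c (X : E) :
  v_ ⟪f2 F (mrunit X)⟫ (v_ ⟪fmu F X munit⟫ (lay (A X) (at_ (feta F)) (id1 _))) = i_ (A X).
Proof. pose proof (frunit F X) as H. tocell H. unlay. exact H. Qed.

Lemma fnat_l (X Y Y' : E) (g : mhom Y Y') :
  v_ ⟪fmu F Y' X⟫ (lay (id1 _) (at_ (f2 F g)) (A X)) = v_ ⟪f2 F (mtenm g (mid X))⟫ ⟪fmu F Y X⟫.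
Proof. pose proof (fmu_nat F (mid X) g) as H. rewrite f2_id in H. tocell H. unlay. exact H. Qed.

Lemma fnat_r (X X' Y : E) (f : mhom X X') :
  v_ ⟪fmu F Y X'⟫ (lay (A Y) (at_ (f2 F f)) (id1 _)) = v_ ⟪f2 F (mtenm (mid Y) f)⟫ ⟪fmu F Y X⟫.
Proof. pose proof (fmu_nat F f (mid Y)) as H. rewrite f2_id in H. tocell H. unlay. exact H. Qed.

End LaxCells.

Section Dual.
Context {E : MonCat} {K : TwoCat} (F : LaxFunctor E K) (hF : is_pseudo F).
Local Notation A := (f1 F).
Local Notation I := (id1 (fob F)).
Definition F2i (Y X : E) := inv2 (proj1 hF Y X).
Definition F0i := inv2 (proj2 hF).
Lemma F2i_l Y X : v_ ⟪F2i Y X⟫ ⟪fmu F Y X⟫ = i_ (comp1 (A Y) (A X)).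
Proof. apply inv2_lc. Qed.
Lemma F2i_r Y X : v_ ⟪fmu F Y X⟫ ⟪F2i Y X⟫ = i_ (A (mten Y X)).
Proof. apply inv2_rc. Qed.
Lemma F0i_l : v_ ⟪F0i⟫ ⟪feta F⟫ = i_ (id1 (fob F)).
Proof. apply inv2_lc. Qed.
Lemma F0i_r : v_ ⟪feta F⟫ ⟪F0i⟫ = i_ (A munit).
Proof. apply inv2_rc. Qed.

Context (L R : E) (ev : mhom (mten L R) munit) (coev : mhom munit (mten R L))
  (snL : mcomp (mlunit L) (mcomp (mtenm ev (mid L))
      (mcomp (massoc_inv L R L) (mcomp (mtenm (mid L) coev) (mrunit_inv L)))) = mid L)
  (snR : mcomp (mrunit R) (mcomp (mtenm (mid R) ev)
      (mcomp (massoc R L R) (mcomp (mtenm coev (mid R)) (mlunit_inv R)))) = mid R).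

Definition eC := vcomp F0i (vcomp (f2 F ev) (fmu F L R)).
Definition nC := vcomp (F2i R L) (vcomp (f2 F coev) (feta F)).

Lemma triR : v_ (lay (A R) (at_ eC) I) (lay I (at_ nC) (A R)) = i_ (A R).
Proof.
  unfold eC, nC. expand.
  pose proof (fassoc_c F R L R) as H.
  prec H ⟪F2i R (mten L R)⟫. rwc_in H (F2i_l R (mten L R)). vid_in H.
  postc H (lay I (at_ (F2i R L)) (A R)).
  inctx (F2i_r R L) (id1 (fob F)) (A R) C1. rwc_in H C1. vid_in H.
  rwcl H.
  pose proof (fnat_r F R ev) as H2.
  prec H2 ⟪F2i R munit⟫. rwc_in H2 (F2i_l R munit). vid_in H2.
  postc H2 ⟪F2i R (mten L R)⟫. rwc_in H2 (F2i_r R (mten L R)). vid_in H2.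
  rwc H2.
  rwc (fnat_l F R coev).
  pose proof (frunit_c F R) as H3.
  postc H3 (lay (A R) (at_ F0i) I).
  inctx F0i_r (A R) (id1 (fob F)) C3. rwc_in H3 C3. vid_in H3.
  postc H3 ⟪F2i R munit⟫. rwc_in H3 (F2i_r R munit). vid_in H3.
  rwcl H3.
  pose proof (flunit_c F R) as H4.
  prec H4 ⟪f2 F (mlunit_inv R)⟫. rwc_in H4 (f2_comp_c F (mlunit R) (mlunit_inv R)).
  rewrite mlunit_iso1, f2_id_c in H4. vid_in H4.
  rwc H4.
  rwc (@f2_comp_c E K F). rwc (@f2_comp_c E K F). rwc (@f2_comp_c E K F). rwc (@f2_comp_c E K F).
  rewrite snR, f2_id_c. reflexivity.
Qed.

Lemma triL : v_ (lay I (at_ eC) (A L)) (lay (A L) (at_ nC) I) = i_ (A L).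
Proof.
  unfold eC, nC. expand.
  pose proof (fassoc_c F L R L) as H.
  prec H ⟪f2 F (massoc_inv L R L)⟫. rwc_in H (f2_comp_c F (massoc L R L) (massoc_inv L R L)).
  rewrite massoc_iso1, f2_id_c in H. vid_in H.
  prec H ⟪F2i (mten L R) L⟫. rwc_in H (F2i_l (mten L R) L). vid_in H.
  postc H (lay (A L) (at_ (F2i R L)) I).
  inctx (F2i_r R L) (A L) (id1 (fob F)) C1. rwc_in H C1. vid_in H.
  rwc H.
  pose proof (fnat_l F L ev) as H2.
  prec H2 ⟪F2i munit L⟫. rwc_in H2 (F2i_l munit L). vid_in H2.
  postc H2 ⟪F2i (mten L R) L⟫. rwc_in H2 (F2i_r (mten L R) L). vid_in H2.
  rwc H2.
  rwc (fnat_r F L coev).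
  pose proof (flunit_c F L) as H3.
  postc H3 (lay I (at_ F0i) (A L)).
  inctx F0i_r (id1 (fob F)) (A L) C3. rwc_in H3 C3. vid_in H3.
  postc H3 ⟪F2i munit L⟫. rwc_in H3 (F2i_r munit L). vid_in H3.
  rwcl H3.
  pose proof (frunit_c F L) as H4.
  prec H4 ⟪f2 F (mrunit_inv L)⟫. rwc_in H4 (f2_comp_c F (mrunit L) (mrunit_inv L)).
  rewrite mrunit_iso1, f2_id_c in H4. vid_in H4.
  rwc H4.
  rwc (@f2_comp_c E K F). rwc (@f2_comp_c E K F). rwc (@f2_comp_c E K F). rwc (@f2_comp_c E K F).
  rewrite snL, f2_id_c. reflexivity.
Qed.
End Dual.

Section ColaxCells.
Context {E : MonCat} {K : TwoCat} {F G : LaxFunctor E K} (T : ColaxTrans F G).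
Local Notation A := (f1 F).
Local Notation B := (f1 G).
Local Notation M := (tM T).
Local Notation s := (tsig T).
Local Notation IF := (id1 (fob F)).
Local Notation IG := (id1 (fob G)).

Lemma tnat_c {X X' : E} (f : mhom X X') :
  v_ (lay IG (at_ (f2 G f)) M) ⟪s X⟫ = v_ ⟪s X'⟫ (lay M (at_ (f2 F f)) IF).
Proof. pose proof (tsig_nat T f) as H. tocell H. unlay. exact H. Qed.

Lemma tmu_c (Y X : E) :
  v_ (lay IG (at_ (fmu G Y X)) M) (v_ (lay (B Y) (at_ (s X)) IF) (lay IG (at_ (s Y)) (A X)))
  = v_ ⟪s (mten Y X)⟫ (lay M (at_ (fmu F Y X)) IF).
Proof. pose proof (tsig_mu T Y X) as H. tocell H. unlay. exact H. Qed.

Lemma teta_c : v_ ⟪s munit⟫ (lay M (at_ (feta F)) IF) = lay IG (at_ (feta G)) M.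
Proof. pose proof (tsig_eta T) as H. tocell H. unlay. exact H. Qed.

Context (hF : is_pseudo F) (hG : is_pseudo G).
Context (X Z : E) (ev : mhom (mten X Z) munit) (coev : mhom munit (mten Z X)).

Lemma colH1 : v_ (lay IG (at_ (eC hG ev)) M) (v_ (lay (B X) (at_ (s Z)) IF) (lay IG (at_ (s X)) (A Z)))
       = lay M (at_ (eC hF ev)) IF.
Proof.
  unfold eC. expand.
  rwc (tmu_c X Z). rwc (tnat_c ev).
  pose proof teta_c as H.
  prec H (lay IG (at_ (F0i hG)) M).
  inctx (F0i_l hG) (id1 (fob G)) (tM T) C. rwc_in H C. vid_in H.
  postc H (lay M (at_ (F0i hF)) IF).
  inctx (F0i_r hF) (tM T) (id1 (fob F)) C'. rwc_in H C'. vid_in H.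
  rwcl H. reflexivity.
Qed.

Lemma colH2 : v_ (lay (B Z) (at_ (s X)) IF) (v_ (lay IG (at_ (s Z)) (A X)) (lay M (at_ (nC hF coev)) IF))
       = lay IG (at_ (nC hG coev)) M.
Proof.
  unfold nC. expand.
  pose proof (tmu_c Z X) as H.
  prec H (lay IG (at_ (F2i hG Z X)) M).
  inctx (F2i_l hG Z X) (id1 (fob G)) (tM T) C. rwc_in H C. vid_in H.
  postc H (lay M (at_ (F2i hF Z X)) IF).
  inctx (F2i_r hF Z X) (tM T) (id1 (fob F)) C'. rwc_in H C'. vid_in H.
  rwc H.
  rwcl (tnat_c coev).
  rwc teta_c. reflexivity.
Qed.
End ColaxCells.

Section LaxSec.
Context {E : MonCat} {K : TwoCat} {F G : LaxFunctor E K} (T : ColaxTrans F G).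
Local Notation A := (f1 F).
Local Notation B := (f1 G).
Local Notation M := (tM T).
Local Notation s := (tsig T).
Local Notation IF := (id1 (fob F)).
Local Notation IG := (id1 (fob G)).
Context (u : c1 (fob G) (fob F)) (et : c2 IF (comp1 u M)) (ep : c2 (comp1 M u) IG)
  (tri1 : v_ (lay IG (at_ ep) M) (lay M (at_ et) IF) = i_ M)
  (tri2 : v_ (lay u (at_ ep) IG) (lay IF (at_ et) u) = i_ u).

Definition thc (X : E) : Cell (fob G) (fob F) :=
  v_ (lay (comp1 u (B X)) (at_ ep) IG) (v_ (lay u (at_ (s X)) u) (lay IF (at_ et) (comp1 (A X) u))).
Lemma thty (X : E) : ty (thc X) (comp1 (A X) u) (comp1 u (B X)).
Proof. unfold thc. tyc. Qed.
Definition th (X : E) : c2 (comp1 (A X) u) (comp1 u (B X)) := tyget (thty X).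
Lemma th_at X : at_ (th X) = thc X.
Proof. apply tyget_at. Qed.

Ltac exth := rewrite ?th_at; unfold thc; flat.

Lemma thnat {X X' : E} (f : mhom X X') :
  v_ (lay u (at_ (f2 G f)) IG) ⟪th X⟫ = v_ ⟪th X'⟫ (lay IF (at_ (f2 F f)) u).
Proof.
  exth.
  sl (at_ (f2 G f)) (at_ ep) (id1 (fob G)).
  inctx (tnat_c T f) u u C. rwc C.
  sl (at_ et) (at_ (f2 F f)) (id1 (fob F)).
  reflexivity.
Qed.

Lemma theta : v_ ⟪th munit⟫ (lay IF (at_ (feta F)) u) = lay u (at_ (feta G)) IG.
Proof.
  exth.
  sl (at_ et) (at_ (feta F)) (id1 (fob F)).
  inctx (teta_c T) u u C. rwc C.
  sl (at_ (feta G)) (at_ ep) (id1 (fob G)).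
  rwc tri2. vid. reflexivity.
Qed.

Lemma thmu (Y X : E) :
  v_ ⟪th (mten Y X)⟫ (lay IF (at_ (fmu F Y X)) u)
  = v_ (lay u (at_ (fmu G Y X)) IG) (v_ (lay IF (at_ (th Y)) (B X)) (lay (A Y) (at_ (th X)) IG)).
Proof.
  exth.
  sl (at_ et) (at_ (fmu F Y X)) (id1 (fob F)).
  inctx (tmu_c T Y X) u u C. rwcl C.
  sl (at_ (fmu G Y X)) (at_ ep) (id1 (fob G)).
  onR ltac:(sl (at_ et) (at_ ep) (comp1 (f1 F Y) (comp1 u (f1 G X)))).
  onR ltac:(sl (at_ et) (at_ (s X)) (comp1 (f1 F Y) u)).
  onR ltac:(sl (at_ et) (at_ et) (f1 F Y)).
  onR ltac:(sl (at_ (s Y)) (at_ ep) (comp1 u (f1 G X))).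
  onR ltac:(sl (at_ (s Y)) (at_ (s X)) u).
  onR ltac:(sl (at_ (s Y)) (at_ et) (id1 (fob F))).
  onR ltac:(sl (at_ ep) (at_ ep) (f1 G X)).
  onR ltac:(sl (at_ ep) (at_ (s X)) (id1 (fob G))).
  inctx tri1 (comp1 u (f1 G Y)) (comp1 (f1 F X) u) C2. rwc C2. vid.
  reflexivity.
Qed.

Context (hF : is_pseudo F) (hG : is_pseudo G).

Lemma laxH1 (Y X : E) (ev : mhom (mten Y X) munit) :
  v_ (lay u (at_ (eC hG ev)) IG) (v_ (lay IF (at_ (th Y)) (B X)) (lay (A Y) (at_ (th X)) IG))
  = lay IF (at_ (eC hF ev)) u.
Proof.
  unfold eC. expand.
  rwcl (thmu Y X).
  rwc (thnat ev).
  pose proof theta as H.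
  prec H (lay u (at_ (F0i hG)) (id1 (fob G))).
  inctx (F0i_l hG) u (id1 (fob G)) C. rwc_in H C. vid_in H.
  postc H (lay (id1 (fob F)) (at_ (F0i hF)) u).
  inctx (F0i_r hF) (id1 (fob F)) u C'. rwc_in H C'. vid_in H.
  rwc H. reflexivity.
Qed.

Lemma laxH2 (Y X : E) (coev : mhom munit (mten X Y)) :
  v_ (lay IF (at_ (th X)) (B Y)) (v_ (lay (A X) (at_ (th Y)) IG) (lay IF (at_ (nC hF coev)) u))
  = lay u (at_ (nC hG coev)) IG.
Proof.
  unfold nC. expand.
  pose proof (thmu X Y) as H.
  prec H (lay u (at_ (F2i hG X Y)) (id1 (fob G))).
  inctx (F2i_l hG X Y) u (id1 (fob G)) C. rwc_in H C. vid_in H.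
  postc H (lay (id1 (fob F)) (at_ (F2i hF X Y)) u).
  inctx (F2i_r hF X Y) (id1 (fob F)) u C'. rwc_in H C'. vid_in H.
  rwcl H.
  rwcl (thnat coev).
  rwc theta. reflexivity.
Qed.
End LaxSec.

Lemma sig_iso {E : MonCat} {K : TwoCat} {F G : LaxFunctor E K} (T : ColaxTrans F G)
  (hF : is_pseudo F) (hG : is_pseudo G) (X Z : E) (ev : mhom (mten X Z) munit)
  (coev : mhom munit (mten Z X))
  (snL : mcomp (mlunit X) (mcomp (mtenm ev (mid X))
      (mcomp (massoc_inv X Z X) (mcomp (mtenm (mid X) coev) (mrunit_inv X)))) = mid X) :
  is_iso2 (tsig T X).
Proof.
  exact (colax_inv (triL hF snL) (triL hG snL) (colH1 T hF hG ev) (colH2 T hF hG coev)).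
Qed.

Lemma th_iso {E : MonCat} {K : TwoCat} {F G : LaxFunctor E K} (T : ColaxTrans F G)
  (u : c1 (fob G) (fob F)) (et : c2 (id1 (fob F)) (comp1 u (tM T))) (ep : c2 (comp1 (tM T) u) (id1 (fob G)))
  (tri1 : v_ (lay (id1 (fob G)) (at_ ep) (tM T)) (lay (tM T) (at_ et) (id1 (fob F))) = i_ (tM T))
  (tri2 : v_ (lay u (at_ ep) (id1 (fob G))) (lay (id1 (fob F)) (at_ et) u) = i_ u)
  (hF : is_pseudo F) (hG : is_pseudo G) (Y X : E) (ev : mhom (mten Y X) munit)
  (coev : mhom munit (mten X Y))
  (snR : mcomp (mrunit X) (mcomp (mtenm (mid X) ev)
      (mcomp (massoc X Y X) (mcomp (mtenm coev (mid X)) (mlunit_inv X)))) = mid X) :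
  is_iso2 (th et ep X).
Proof.
  exact (lax_inv (triR hF snR) (triR hG snR) (laxH1 tri1 tri2 hF hG ev) (laxH2 tri1 tri2 hF hG coev)).
Qed.

Section PartL.
Context {E : MonCat} {K : TwoCat} {F G : LaxFunctor E K} (T : ColaxTrans F G).
Local Notation A := (f1 F).
Local Notation B := (f1 G).
Local Notation M := (tM T).
Local Notation s := (tsig T).
Local Notation IF := (id1 (fob F)).
Local Notation IG := (id1 (fob G)).
Context (u : c1 (fob G) (fob F)) (et : c2 IF (comp1 u M)) (ep : c2 (comp1 M u) IG)
  (tri1 : v_ (lay IG (at_ ep) M) (lay M (at_ et) IF) = i_ M)
  (tri2 : v_ (lay u (at_ ep) IG) (lay IF (at_ et) u) = i_ u).
Context (thi : forall X, is_iso2 (th et ep X)).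

Definition sp (X : E) : c2 (comp1 u (B X)) (comp1 (A X) u) := inv2 (thi X).
Lemma sp_l X : v_ ⟪sp X⟫ ⟪th et ep X⟫ = i_ (comp1 (A X) u).
Proof. apply inv2_lc. Qed.
Lemma sp_r X : v_ ⟪th et ep X⟫ ⟪sp X⟫ = i_ (comp1 u (B X)).
Proof. apply inv2_rc. Qed.

Lemma sp_nat_c {X X' : E} (f : mhom X X') :
  v_ (lay IF (at_ (f2 F f)) u) ⟪sp X⟫ = v_ ⟪sp X'⟫ (lay u (at_ (f2 G f)) IG).
Proof.
  pose proof (thnat et ep f) as H.
  prec H ⟪sp X'⟫. rwc_in H (sp_l X'). vid_in H.
  postc H ⟪sp X⟫. rwc_in H (sp_r X). vid_in H.
  symmetry; exact H.
Qed.

Lemma sp_mu_c (Y X : E) :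
  v_ (lay IF (at_ (fmu F Y X)) u) (v_ (lay (A Y) (at_ (sp X)) IG) (lay IF (at_ (sp Y)) (B X)))
  = v_ ⟪sp (mten Y X)⟫ (lay u (at_ (fmu G Y X)) IG).
Proof.
  pose proof (thmu tri1 Y X) as H.
  prec H ⟪sp (mten Y X)⟫. rwc_in H (sp_l (mten Y X)). vid_in H.
  postc H (lay (A Y) (at_ (sp X)) IG).
  inctx (sp_r X) (f1 F Y) (id1 (fob G)) C. rwc_in H C. vid_in H.
  postc H (lay IF (at_ (sp Y)) (B X)).
  inctx (sp_r Y) (id1 (fob F)) (f1 G X) C'. rwc_in H C'. vid_in H.
  exact H.
Qed.

Lemma sp_eta_c : v_ ⟪sp munit⟫ (lay u (at_ (feta G)) IG) = lay IF (at_ (feta F)) u.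
Proof.
  pose proof (theta tri2) as H.
  prec H ⟪sp munit⟫. rwc_in H (sp_l munit). vid_in H.
  symmetry; exact H.
Qed.

Lemma m1aux (X : E) :
  v_ (lay u (at_ (s X)) IF) (lay IF (at_ et) (A X))
  = v_ (lay IF (at_ (th et ep X)) M) (lay (A X) (at_ et) IF).
Proof.
  rewrite th_at. unfold thc. flat.
  onR ltac:(sl (at_ et) (at_ et) (f1 F X)).
  onR ltac:(sl (at_ (s X)) (at_ et) (id1 (fob F))).
  inctx tri1 (comp1 u (f1 G X)) (id1 (fob F)) C. onR ltac:(rwc C). vid.
  reflexivity.
Qed.

Lemma m2aux (X : E) :
  v_ (lay (B X) (at_ ep) IG) (lay IG (at_ (s X)) u)
  = v_ (lay IG (at_ ep) (B X)) (lay M (at_ (th et ep X)) IG).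
Proof.
  rewrite th_at. unfold thc. flat.
  onR ltac:(sl (at_ ep) (at_ ep) (f1 G X)).
  onR ltac:(sl (at_ ep) (at_ (s X)) (id1 (fob G))).
  inctx tri1 (id1 (fob G)) (comp1 (f1 F X) u) C. onR ltac:(rwc C). vid.
  reflexivity.
Qed.

Lemma m1c (X : E) :
  lay (A X) (at_ et) IF = v_ (lay IF (at_ (sp X)) M) (v_ (lay u (at_ (s X)) IF) (lay IF (at_ et) (A X))).
Proof.
  rwc (m1aux X).
  inctx (sp_l X) (id1 (fob F)) (tM T) C. rwc C. vid. reflexivity.
Qed.

Lemma m2c (X : E) :
  v_ (lay (B X) (at_ ep) IG) (v_ (lay IG (at_ (s X)) u) (lay M (at_ (sp X)) IG)) = lay IG (at_ ep) (B X).
Proof.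
  rwc (m2aux X).
  inctx (sp_r X) (tM T) (id1 (fob G)) C. rwc C. vid. reflexivity.
Qed.
End PartL.

Section PartR.
Context {E : MonCat} {K : TwoCat} {F G : LaxFunctor E K} (T : ColaxTrans F G).
Local Notation A := (f1 F).
Local Notation B := (f1 G).
Local Notation M := (tM T).
Local Notation s := (tsig T).
Local Notation IF := (id1 (fob F)).
Local Notation IG := (id1 (fob G)).
Context (u : c1 (fob G) (fob F)) (et : c2 IG (comp1 M u)) (ep : c2 (comp1 u M) IF)
  (tri1 : v_ (lay IF (at_ ep) u) (lay u (at_ et) IG) = i_ u)
  (tri2 : v_ (lay M (at_ ep) IF) (lay IG (at_ et) M) = i_ M).
Context (sii : forall X, is_iso2 (s X)).

Definition si (X : E) : c2 (comp1 (B X) M) (comp1 M (A X)) := inv2 (sii X).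
Lemma si_l X : v_ ⟪si X⟫ ⟪s X⟫ = i_ (comp1 M (A X)).
Proof. apply inv2_lc. Qed.
Lemma si_r X : v_ ⟪s X⟫ ⟪si X⟫ = i_ (comp1 (B X) M).
Proof. apply inv2_rc. Qed.

Lemma si_nat {X X' : E} (f : mhom X X') :
  v_ (lay M (at_ (f2 F f)) IF) ⟪si X⟫ = v_ ⟪si X'⟫ (lay IG (at_ (f2 G f)) M).
Proof.
  pose proof (tnat_c T f) as H.
  prec H ⟪si X'⟫. rwc_in H (si_l X'). vid_in H.
  postc H ⟪si X⟫. rwc_in H (si_r X). vid_in H.
  symmetry; exact H.
Qed.

Lemma si_mu (Y X : E) :
  v_ ⟪si (mten Y X)⟫ (lay IG (at_ (fmu G Y X)) M)
  = v_ (lay M (at_ (fmu F Y X)) IF) (v_ (lay IG (at_ (si Y)) (A X)) (lay (B Y) (at_ (si X)) IF)).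
Proof.
  pose proof (tmu_c T Y X) as H.
  prec H ⟪si (mten Y X)⟫. rwc_in H (si_l (mten Y X)). vid_in H.
  postc H (lay IG (at_ (si Y)) (A X)).
  inctx (si_r Y) (id1 (fob G)) (f1 F X) C. rwc_in H C. vid_in H.
  postc H (lay (B Y) (at_ (si X)) IF).
  inctx (si_r X) (f1 G Y) (id1 (fob F)) C'. rwc_in H C'. vid_in H.
  exact H.
Qed.

Lemma si_eta : v_ ⟪si munit⟫ (lay IG (at_ (feta G)) M) = lay M (at_ (feta F)) IF.
Proof.
  pose proof (teta_c T) as H.
  prec H ⟪si munit⟫. rwc_in H (si_l munit). vid_in H.
  symmetry; exact H.
Qed.

Definition sppc (X : E) : Cell (fob G) (fob F) :=
  v_ (lay IF (at_ ep) (comp1 (A X) u)) (v_ (lay u (at_ (si X)) u) (lay (comp1 u (B X)) (at_ et) IG)).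
Lemma sppty (X : E) : ty (sppc X) (comp1 u (B X)) (comp1 (A X) u).
Proof. unfold sppc. tyc. Qed.
Definition spp (X : E) : c2 (comp1 u (B X)) (comp1 (A X) u) := tyget (sppty X).
Lemma spp_at X : at_ (spp X) = sppc X.
Proof. apply tyget_at. Qed.
Ltac exs := rewrite ?spp_at; unfold sppc; flat.

Lemma spp_nat {X X' : E} (f : mhom X X') :
  v_ (lay IF (at_ (f2 F f)) u) ⟪spp X⟫ = v_ ⟪spp X'⟫ (lay u (at_ (f2 G f)) IG).
Proof.
  exs.
  onL ltac:(sl (at_ ep) (at_ (f2 F f)) (id1 (fob F))).
  inctx (si_nat f) u u C. onL ltac:(rwc C).
  onL ltac:(sl (at_ (f2 G f)) (at_ et) (id1 (fob G))).
  reflexivity.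
Qed.

Lemma spp_eta : v_ ⟪spp munit⟫ (lay u (at_ (feta G)) IG) = lay IF (at_ (feta F)) u.
Proof.
  exs.
  sl (at_ (feta G)) (at_ et) (id1 (fob G)).
  inctx si_eta u u C. rwc C.
  sl (at_ ep) (at_ (feta F)) (id1 (fob F)).
  rwc tri1. vid. reflexivity.
Qed.

Lemma spp_mu (Y X : E) :
  v_ (lay IF (at_ (fmu F Y X)) u) (v_ (lay (A Y) (at_ (spp X)) IG) (lay IF (at_ (spp Y)) (B X)))
  = v_ ⟪spp (mten Y X)⟫ (lay u (at_ (fmu G Y X)) IG).
Proof.
  exs.
  onR ltac:(sl (at_ (fmu G Y X)) (at_ et) (id1 (fob G))).
  inctx (si_mu Y X) u u C. onR ltac:(rwc C).
  onR ltac:(sl (at_ ep) (at_ (fmu F Y X)) (id1 (fob F))).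
  onL ltac:(sl (at_ ep) (at_ et) (comp1 (f1 F Y) (comp1 u (f1 G X)))).
  onL ltac:(sl (at_ (si Y)) (at_ et) (comp1 u (f1 G X))).
  onL ltac:(sl (at_ et) (at_ et) (f1 G X)).
  onL ltac:(sl (at_ ep) (at_ (si X)) (comp1 (f1 F Y) u)).
  onL ltac:(sl (at_ (si Y)) (at_ (si X)) u).
  onL ltac:(sl (at_ et) (at_ (si X)) (id1 (fob G))).
  onL ltac:(sl (at_ ep) (at_ ep) (f1 F Y)).
  onL ltac:(sl (at_ (si Y)) (at_ ep) (id1 (fob F))).
  inctx tri2 (comp1 u (f1 G Y)) (comp1 (f1 F X) u) C2. onL ltac:(rwc C2). vid.
  reflexivity.
Qed.

Lemma mR1 (X : E) :
  lay (B X) (at_ et) IG = v_ (lay IG (at_ (s X)) u) (v_ (lay M (at_ (spp X)) IG) (lay IG (at_ et) (B X))).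
Proof.
  exs.
  onR ltac:(sl (at_ et) (at_ et) (f1 G X)).
  onR ltac:(sl (at_ et) (at_ (si X)) (id1 (fob G))).
  inctx tri2 (id1 (fob G)) (comp1 (f1 F X) u) C. onR ltac:(rwc C). vid.
  inctx (si_r X) (id1 (fob G)) u C'. onR ltac:(rwc C'). vid.
  reflexivity.
Qed.

Lemma mR2 (X : E) :
  v_ (lay (A X) (at_ ep) IF) (v_ (lay IF (at_ (spp X)) M) (lay u (at_ (s X)) IF)) = lay IF (at_ ep) (A X).
Proof.
  exs.
  sl (at_ ep) (at_ ep) (f1 F X).
  sl (at_ (si X)) (at_ ep) (id1 (fob F)).
  inctx tri2 (comp1 u (f1 G X)) (id1 (fob F)) C. rwc C. vid.
  inctx (si_l X) u (id1 (fob F)) C'. rwc C'. vid.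
  reflexivity.
Qed.
End PartR.

Section MainL.
Context {E : MonCat} {K : TwoCat} {F G : LaxFunctor E K} (T : ColaxTrans F G).
Local Notation A := (f1 F).
Local Notation B := (f1 G).
Local Notation M := (tM T).
Local Notation s := (tsig T).
Local Notation IF := (id1 (fob F)).
Local Notation IG := (id1 (fob G)).
Context (u : c1 (fob G) (fob F)) (et : c2 IF (comp1 u M)) (ep : c2 (comp1 M u) IG)
  (tri1 : v_ (lay IG (at_ ep) M) (lay M (at_ et) IF) = i_ M)
  (tri2 : v_ (lay u (at_ ep) IG) (lay IF (at_ et) u) = i_ u).
Context (thi : forall X, is_iso2 (th et ep X)).

Lemma sp_nat (X X' : E) (f : mhom X X') :
  vcomp (hcomp (f2 F f) (id2 u)) (sp thi X) = vcomp (sp thi X') (hcomp (id2 u) (f2 G f)).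
Proof.
  pose proof (sp_nat_c thi f) as H. unlay_in H. tocellG. exact H.
Qed.

Lemma sp_mu (Y X : E) :
  vcomp (hcomp (fmu F Y X) (id2 u))
    (cast2 eq_refl (comp1_assoc u (f1 F X) (f1 F Y))
       (vcomp (hcomp (id2 (f1 F Y)) (sp thi X))
          (cast2 eq_refl (eq_sym (comp1_assoc (f1 G X) u (f1 F Y)))
             (hcomp (sp thi Y) (id2 (f1 G X))))))
  = cast2 (comp1_assoc (f1 G X) (f1 G Y) u) eq_refl
      (vcomp (sp thi (mten Y X)) (hcomp (id2 u) (fmu G Y X))).
Proof.
  pose proof (sp_mu_c tri1 thi Y X) as H. unlay_in H. tocellG. exact H.
Qed.

Lemma sp_eta :
  cast2 (comp1_idr u) eq_refl (vcomp (sp thi munit) (hcomp (id2 u) (feta G)))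
  = cast2 (comp1_idl u) eq_refl (hcomp (feta F) (id2 u)).
Proof.
  pose proof (sp_eta_c tri2 thi) as H. unlay_in H. tocellG. exact H.
Qed.

Definition Ucol : ColaxTrans G F :=
  {| tM := u; tsig := sp thi; tsig_nat := sp_nat; tsig_mu := sp_mu; tsig_eta := sp_eta |}.

Lemma Ucol_adj (Htri : triangles et ep) : is_left_adjoint_Z T Ucol.
Proof.
  exists et, ep. split; [|split].
  - intro X. unfold id_sig, comp_sig. cbn [tsig tM Ucol].
    pose proof (m1c tri1 thi X) as H. unlay_in H. tocellG. vid. rn. exact H.
  - intro X. unfold id_sig, comp_sig. cbn [tsig tM Ucol].
    pose proof (m2c tri1 thi X) as H. unlay_in H. tocellG. vid. rn. exact H.
  - exact Htri.
Qed.
End MainL.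

Section MainR.
Context {E : MonCat} {K : TwoCat} {F G : LaxFunctor E K} (T : ColaxTrans F G).
Local Notation A := (f1 F).
Local Notation B := (f1 G).
Local Notation M := (tM T).
Local Notation s := (tsig T).
Local Notation IF := (id1 (fob F)).
Local Notation IG := (id1 (fob G)).
Context (u : c1 (fob G) (fob F)) (et : c2 IG (comp1 M u)) (ep : c2 (comp1 u M) IF)
  (tri1 : v_ (lay IF (at_ ep) u) (lay u (at_ et) IG) = i_ u)
  (tri2 : v_ (lay M (at_ ep) IF) (lay IG (at_ et) M) = i_ M).
Context (sii : forall X, is_iso2 (s X)).

Lemma spp_natT (X X' : E) (f : mhom X X') :
  vcomp (hcomp (f2 F f) (id2 u)) (spp et ep sii X) = vcomp (spp et ep sii X') (hcomp (id2 u) (f2 G f)).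
Proof.
  pose proof (spp_nat et ep sii f) as H. unlay_in H. tocellG. exact H.
Qed.

Lemma spp_muT (Y X : E) :
  vcomp (hcomp (fmu F Y X) (id2 u))
    (cast2 eq_refl (comp1_assoc u (f1 F X) (f1 F Y))
       (vcomp (hcomp (id2 (f1 F Y)) (spp et ep sii X))
          (cast2 eq_refl (eq_sym (comp1_assoc (f1 G X) u (f1 F Y)))
             (hcomp (spp et ep sii Y) (id2 (f1 G X))))))
  = cast2 (comp1_assoc (f1 G X) (f1 G Y) u) eq_refl
      (vcomp (spp et ep sii (mten Y X)) (hcomp (id2 u) (fmu G Y X))).
Proof.
  pose proof (spp_mu tri2 sii Y X) as H. unlay_in H. tocellG. exact H.
Qed.

Lemma spp_etaT :
  cast2 (comp1_idr u) eq_refl (vcomp (spp et ep sii munit) (hcomp (id2 u) (feta G)))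
  = cast2 (comp1_idl u) eq_refl (hcomp (feta F) (id2 u)).
Proof.
  pose proof (spp_eta tri1 sii) as H. unlay_in H. tocellG. exact H.
Qed.

Definition Vcol : ColaxTrans G F :=
  {| tM := u; tsig := spp et ep sii; tsig_nat := spp_natT; tsig_mu := spp_muT; tsig_eta := spp_etaT |}.

Lemma Vcol_adj (Htri : triangles et ep) : is_left_adjoint_Z Vcol T.
Proof.
  exists et, ep. split; [|split].
  - intro X. unfold id_sig, comp_sig. cbn [tsig tM Vcol].
    pose proof (mR1 tri2 sii X) as H. unlay_in H. tocellG. vid. rn. exact H.
  - intro X. unfold id_sig, comp_sig. cbn [tsig tM Vcol].
    pose proof (mR2 tri2 sii X) as H. unlay_in H. tocellG. vid. rn. exact H.
  - exact Htri.
Qed.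
End MainR.

Theorem proposition3p15 (E : MonCat) (K : TwoCat)
  (hE : mon_autonomous E) (hK : twocat_autonomous K)
  (F G : LaxFunctor E K) (hF : is_pseudo F) (hG : is_pseudo G)
  (T : ColaxTrans F G) :
  (exists U : ColaxTrans G F, is_left_adjoint_Z T U)
  /\ (exists U : ColaxTrans G F, is_left_adjoint_Z U T).
Proof.
  split.
  - destruct (proj1 (hK _ _ (tM T))) as [u [et [ep Htri]]].
    destruct (tri_c Htri) as [tri1 tri2].
    assert (thi : forall X, is_iso2 (th et ep X)).
    { intro X. destruct (proj1 (hE X)) as [Y [ev [coev [snL snR]]]].
      exact (th_iso tri1 tri2 hF hG snR). }
    exists (Ucol tri1 tri2 thi). exact (Ucol_adj tri1 tri2 thi Htri).
  - destruct (proj2 (hK _ _ (tM T))) as [u [et [ep Htri]]].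
    destruct (tri_c Htri) as [tri1 tri2].
    assert (sii : forall X, is_iso2 (tsig T X)).
    { intro X. destruct (proj2 (hE X)) as [Z [ev [coev [snL snR]]]].
      exact (sig_iso T hF hG snL). }
    exists (Vcol tri1 tri2 sii). exact (Vcol_adj tri1 tri2 sii Htri).
Qed.
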